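(* Let $q$ be a prime number, $l\ge 2$ an integer, and $\alpha=\alpha_1/\alpha_2\in\mathbb{Q}\text{-}\mathcal{KS}(q^{l})$ with $\gcd(\alpha_1,q)=1$. Then $$1+q-q^{l-1}\le\alpha\le q^{l-1}+q-1.$$
   Context: Every nonzero rational $\alpha$ is written $\alpha=\alpha_1/\alpha_2$ with $\alpha_1\in\mathbb{Z}$, $\alpha_2$ a positive integer and $\gcd(\alpha_1,\alpha_2)=1$. For an integer $N\ge 2$ and a nonzero rational $\alpha=\alpha_1/\alpha_2$, $N$ is called an $\alpha$-Korselt number if $N\neq\alpha$ and $\alpha_2p-\alpha_1$ divides $\alpha_2N-\alpha_1$ (in $\mathbb{Z}$) for every prime divisor $p$ of $N$. $\mathbb{Q}\text{-}\mathcal{KS}(N)$ is the set of all $\beta\in\mathbb{Q}\setminus\{0,N\}$ such that $N$ is a $\beta$-Korselt number. *)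

(* Defs.v *)
From mathcomp Require Import all_boot all_order all_algebra.
Set Implicit Arguments. Unset Strict Implicit. Unset Printing Implicit Defensive.
Import Order.TTheory GRing.Theory Num.Theory.
Local Open Scope ring_scope.

(* alpha = numq alpha / denq alpha, with denq > 0 and coprime: the paper's
   alpha_1 / alpha_2 representation. *)
Definition Korselt (N : nat) (alpha : rat) : Prop :=
  (2 <= N)%N /\ alpha != N%:R /\
  forall p : nat, prime p -> (p %| N)%N ->
    (denq alpha * p%:Z - numq alpha %| denq alpha * N%:Z - numq alpha)%Z.

Definition QKS (N : nat) (beta : rat) : Prop :=
  beta != 0 /\ beta != N%:R /\ Korselt N beta.

(* Main.v *)
Require Import Defs.
From mathcomp Require Import all_boot all_order all_algebra.
From mathcomp Require Import ring lra zify.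
Import Order.TTheory GRing.Theory Num.Theory.
Local Open Scope ring_scope.

Theorem proposition2p4 (q l : nat) (alpha : rat) :
  prime q -> (2 <= l)%N -> QKS (q ^ l) alpha ->
  coprime `|numq alpha|%N q ->
  1 + q%:R - (q ^ l.-1)%:R <= alpha /\ alpha <= (q ^ l.-1)%:R + q%:R - 1.
Proof.
move=> pq l2 [_ [_ [_ [_ H]]]] cop.
set a1 := numq alpha; set a2 := denq alpha.
set Q := (q ^ l.-1)%N.
have ql : (q ^ l)%N = (q * Q)%N by rewrite /Q -expnS prednK // (leq_trans _ l2).
have qd : (q %| q ^ l)%N by rewrite ql dvdn_mulr.
have := H q pq qd.
have q1 : (1 < q)%N by apply: prime_gt1.
have Q1 : (1 < Q)%N by rewrite /Q -(exp1n l.-1) ltn_exp2r // -ltnS prednK // (leq_trans _ l2).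
set d := a2 * q%:Z - a1.
move=> /dvdzP [k hk].
have hd : (d %| a2 * (q%:Z * (Q%:Z - 1)))%Z.
  apply/dvdzP; exists (k - 1).
  rewrite mulrBl -hk ql PoszM /d; ring.
have c2 : coprimez d a2.
  have := coprime_num_den alpha; rewrite -/a1 -/a2 -coprimezE => /coprimezP [[u v] /= huv].
  apply/coprimezP; exists (- u, v + u * q%:Z) => /=; rewrite /d -huv; ring.
have cq : coprimez d q%:Z.
  move: cop; rewrite -/a1 -[q in coprime _ q]/(`|q%:Z|%N) -coprimezE => /coprimezP [[u v] /= huv].
  apply/coprimezP; exists (- u, v + u * a2) => /=; rewrite /d -huv; ring.
move: hd; rewrite Gauss_dvdzr // Gauss_dvdzr // dvdzE => hd.
have hM : (`|d| <= Q - 1)%N.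
  apply: dvdn_leq; first by rewrite subn_gt0.
  suff <- : `|Q%:Z - 1|%N = (Q - 1)%N by [].
  lia.
have a2p : 0 < a2 by apply: denq_gt0.
have hdi : `|d| <= Q%:Z - 1.
  have -> : Q%:Z - 1 = (Q - 1)%N%:Z by lia.
  by rewrite -abszE lez_nat.
have [h1 h2] : -(Q%:Z - 1) <= d /\ d <= Q%:Z - 1.
  by split; [rewrite lerNl; apply: le_trans hdi; rewrite -normrN ler_norm | apply: le_trans hdi; rewrite ler_norm].
have m : Q%:Z - 1 <= a2 * (Q%:Z - 1).
  by rewrite ler_peMl // subr_ge0 lez_nat ltnW.
have k1 : a2 * (1 + q%:Z - Q%:Z) <= a1.
  have -> : a2 * (1 + q%:Z - Q%:Z) = a2 * q%:Z - a2 * (Q%:Z - 1) by ring.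
  move: h2 m; rewrite /d; set x := a2 * q%:Z; set y := a2 * (Q%:Z - 1); lia.
have k2 : a1 <= a2 * (Q%:Z + q%:Z - 1).
  have -> : a2 * (Q%:Z + q%:Z - 1) = a2 * q%:Z + a2 * (Q%:Z - 1) by ring.
  move: h1 m; rewrite /d; set x := a2 * q%:Z; set y := a2 * (Q%:Z - 1); lia.
have E : (a1%:~R : rat) = alpha * a2%:~R by rewrite numqE.
have a2q : (0 : rat) < a2%:~R by rewrite ltr0z.
split. {
  rewrite -(ler_pM2r a2q) -E mulrC.
  move: k1; rewrite -(ler_int rat) rmorphM /= rmorphB rmorphD /=; exact: id. }
rewrite -(ler_pM2r a2q) -E mulrC.
move: k2; rewrite -(ler_int rat) rmorphM /= rmorphB rmorphD /=; exact: id.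
Qed.
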